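(* Let $1\le p<\infty$. The correspondence $E\mapsto\ell_p^{mid}(E)$ is a finitely determined sequence class; that is: for every Banach space $E$, $c_{00}(E)\subseteq\ell_p^{mid}(E)$ and $\sup_j\|x_j\|\le\|(x_j)_{j}\|_{mid,p}$ for every $(x_j)_j\in\ell_p^{mid}(E)$; the canonical unit scalar sequences satisfy $\|e_j\|_{mid,p}=1$ in $\ell_p^{mid}(\mathbb{K})$; and an $E$-valued sequence $(x_j)_{j=1}^\infty$ belongs to $\ell_p^{mid}(E)$ if and only if $\sup_k\|(x_j)_{j=1}^k\|_{mid,p}<\infty$, in which case $\|(x_j)_{j=1}^\infty\|_{mid,p}=\sup_k\|(x_j)_{j=1}^k\|_{mid,p}$.
   Context: Banach spaces are over $\mathbb{K}=\mathbb{R}$ or $\mathbb{C}$. $c_{00}(E)$ is the space of eventually null $E$-valued sequences; $(x_j)_{j=1}^k$ denotes the sequence $(x_1,\dots,x_k,0,0,\dots)$. $\ell_p^w(E)$: sequences with $\|(x_j)\|_{w,p}:=\sup_{x^*\in B_{E^*}}(\sum_j|x^*(x_j)|^p)^{1/p}<\infty$. $\ell_p^{mid}(E)$ consists of all $(x_j)\in\ell_p^w(E)$ with $\sum_n\sum_j|x_n^*(x_j)|^p<\infty$ for every $(x_n^* )\in\ell_p^w(E^* )$, with the norm $\|(x_j)\|_{mid,p}=\sup_{(x_n^* )\in B_{\ell_p^w(E^* )}}(\sum_n\sum_j|x_n^*(x_j)|^p)^{1/p}$ (for an arbitrary $E$-valued sequence this supremum may be $+\infty$). *)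

(* Defs.v *)
From HB Require Import structures.
From mathcomp Require Import all_boot all_order all_algebra.
From mathcomp Require Import all_classical all_reals all_analysis.
From mathcomp Require Import complex.
Set Implicit Arguments. Unset Strict Implicit. Unset Printing Implicit Defensive.
Import Order.TTheory GRing.Theory Num.Theory.
Import numFieldNormedType.Exports.
Local Open Scope classical_set_scope.
Local Open Scope ring_scope.

(* Scalar field K (= R or C), with nr : K -> R the absolute value as a real
   number (normr for K = R, Normc.normc for K = R[i]). *)
Section MidSpaces.
Variables (R : realType) (K : numFieldType) (nr : K -> R).

Definition is_lin (V : lmodType K) (f : V -> K) : Prop :=
  forall (a : K) (x y : V), f (a *: x + y) = a * f x + f y.

Definition psum (p : R) (u : nat -> R) : \bar R :=
  (\sum_(j <oo) ((u j) `^ p)%:E)%E.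

Section OverE.
Variable E : normedModType K.

Definition dual_space : set (E -> K) :=
  [set f | is_lin f /\ exists c : R, forall x, nr (f x) <= c * nr `|x|].

Definition dual_ball : set (E -> K) :=
  [set f | is_lin f /\ forall x, nr (f x) <= nr `|x|].

Definition dual_norm (f : E -> K) : \bar R :=
  ereal_sup [set (nr (f x))%:E | x in [set x : E | nr `|x| <= 1]].

Definition bidual_ball : set ((E -> K) -> K) :=
  [set phi | (forall (a : K) (f g : E -> K), dual_space f -> dual_space g ->
                 phi (fun x => a * f x + g x) = a * phi f + phi g) /\
             (forall f, dual_space f -> ((nr (phi f))%:E <= dual_norm f)%E)].

Definition weak_norm (p : R) (xs : nat -> E) : \bar R :=
  ereal_sup [set ((psum p (fun j => nr (f (xs j)))) `^ p^-1)%E | f in dual_ball].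

Definition weak_seq (p : R) (xs : nat -> E) : Prop := (weak_norm p xs < +oo)%E.

Definition weak_norm_dual (p : R) (fs : nat -> E -> K) : \bar R :=
  ereal_sup [set ((psum p (fun n => nr (phi (fs n)))) `^ p^-1)%E | phi in bidual_ball].

Definition weak_seq_dual (p : R) (fs : nat -> E -> K) : Prop :=
  (forall n, dual_space (fs n)) /\ (weak_norm_dual p fs < +oo)%E.

Definition mid_sum (p : R) (fs : nat -> E -> K) (xs : nat -> E) : \bar R :=
  (\sum_(n <oo) psum p (fun j => nr (fs n (xs j))))%E.

Definition mid_norm (p : R) (xs : nat -> E) : \bar R :=
  ereal_sup [set ((mid_sum p fs xs) `^ p^-1)%E |
     fs in [set fs | (forall n, dual_space (fs n)) /\ (weak_norm_dual p fs <= 1)%E]].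

Definition mid_seq (p : R) (xs : nat -> E) : Prop :=
  weak_seq p xs /\
  forall fs, weak_seq_dual p fs -> (mid_sum p fs xs < +oo)%E.

(* (x_j)_{j=1}^k = (x_1, ..., x_k, 0, 0, ...); indices shifted to start at 0 *)
Definition trunc (k : nat) (xs : nat -> E) : nat -> E :=
  fun j => if (j < k)%N then xs j else 0.

Definition c00 (xs : nat -> E) : Prop := exists N, forall j, (N <= j)%N -> xs j = 0.

End OverE.

Definition unit_seq (j : nat) : nat -> K := fun i => if i == j then 1 else 0.

Definition mid_finitely_determined (p : R) : Prop :=
  (forall E : completeNormedModType K,
     (forall xs : nat -> E, c00 xs -> mid_seq p xs) /\
     (forall xs : nat -> E, mid_seq p xs ->
        forall j, ((nr `|xs j|)%:E <= mid_norm p xs)%E) /\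
     (forall xs : nat -> E,
        mid_seq p xs <->
        (ereal_sup (range (fun k => mid_norm p (trunc k xs))) < +oo)%E) /\
     (forall xs : nat -> E, mid_seq p xs ->
        mid_norm p xs = ereal_sup (range (fun k => mid_norm p (trunc k xs))))) /\
  (forall j : nat, mid_norm (E := K) p (unit_seq j) = 1%E).

End MidSpaces.

(* Main.v *)
Require Import Defs.
From HB Require Import structures.
From mathcomp Require Import all_boot all_order all_algebra.
From mathcomp Require Import all_classical all_reals all_analysis.
From mathcomp Require Import complex.
From mathcomp Require Import ring lra.
Set Implicit Arguments. Unset Strict Implicit. Unset Printing Implicit Defensive.
Import Order.TTheory GRing.Theory Num.Theory.
Import numFieldNormedType.Exports.
Local Open Scope classical_set_scope.
Local Open Scope ring_scope.
Section RealHB.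
Variables (R : realType) (V : lmodType R) (q : V -> R).
Hypothesis qD : forall x y, q (x + y) <= q x + q y.
Hypothesis qZ : forall (a : R) x, q (a *: x) = `|a| * q x.
Variable x0 : V.

Lemma q0 : q 0 = 0.
Proof. by rewrite -(scale0r (0:V)) qZ normr0 mul0r. Qed.

Lemma qN x : q (- x) = q x.
Proof. by rewrite -scaleN1r qZ normrN normr1 mul1r. Qed.

Lemma q_ge0 x : 0 <= q x.
Proof.
have := qD x (- x); rewrite subrr q0 qN => h.
have : 0 <= q x *+ 2 by rewrite mulr2n.
by rewrite pmulrn_lge0.
Qed.

Definition hvalid (A : set (V * R)) :=
 [/\ forall a u r w s, A (u,r) -> A (w,s) -> A (a *: u + w, a * r + s),
     A (0,0),
     forall u r s, A (u,r) -> A (u,s) -> r = s,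
     forall u r, A (u,r) -> r <= q u &
     A (x0, q x0)].

Definition hP (A : set (V * R)) := A = set0 \/ hvalid A.

Lemma hP_chain (F : set (set (V * R))) : F `<=` hP -> total_on F subset ->
  hP (\bigcup_(X in F) X).
Proof.
move=> FP tot.
case: (pselect (exists X, F X /\ X !=set0)); last first.
  move=> H; left; apply/seteqP; split => // z [X FX Xz].
  by exfalso; apply: H; exists X; split => //; exists z.
move=> [X0 [FX0 X0n]].
have valF X : F X -> X !=set0 -> hvalid X.
  by move=> FX Xn; case: (FP X FX) => // X0'; move: Xn; rewrite X0' => -[].
have both z1 z2 : (\bigcup_(X in F) X) z1 -> (\bigcup_(X in F) X) z2 ->
   exists Y, [/\ F Y, hvalid Y, Y z1 & Y z2].
  move=> [X1 FX1 X1z] [X2 FX2 X2z].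
  case: (tot _ _ FX1 FX2) => sub.
    exists X2; split => //; [apply: valF => //; by exists z2|exact: sub].
  exists X1; split => //; [apply: valF => //; by exists z1|exact: sub].
right; split.
- move=> a u r w s h1 h2; have [Y [FY vY Y1 Y2]] := both _ _ h1 h2.
  by exists Y => //; case: vY => lin _ _ _ _; apply: lin.
- by exists X0 => //; case: (valF _ FX0 X0n).
- move=> u r s h1 h2; have [Y [FY vY Y1 Y2]] := both _ _ h1 h2.
  by case: vY => _ _ fn _ _; apply: fn Y1 Y2.
- move=> u r [X FX Xz]; have vX : hvalid X by apply: valF => //; exists (u,r).
  by case: vX => _ _ _ dm _; apply: dm.
- by exists X0 => //; case: (valF _ FX0 X0n).
Qed.

Lemma hvalid_extend (A : set (V * R)) v : hvalid A -> (forall r, ~ A (v, r)) ->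
  exists B, A `<` B /\ hvalid B.
Proof.
case=> lin z0 fn dm bs nv.
have key u r w s : A (u,r) -> A (w,s) -> r - q (u - v) <= q (w + v) - s.
  move=> h1 h2; have h3 := lin 1 _ _ _ _ h1 h2; rewrite scale1r mul1r in h3.
  have := dm _ _ h3; have := qD (u - v) (w + v).
  have -> : u - v + (w + v) = u + w by rewrite addrACA addNr addr0.
  move=> h4 h5; lra.
pose S := [set y | exists u r, A (u,r) /\ y = r - q (u - v)].
have Sn : S !=set0 by exists (0 - q (0 - v)); exists 0, 0.
have Sub : has_ubound S.
  by exists (q (0 + v) - 0) => y [u [r [h ->]]]; apply: key.
pose c := sup S.
have c1 u r : A (u,r) -> r - q (u - v) <= c.
  by move=> h; apply: ub_le_sup => //; exists u, r.
have c2 w s : A (w,s) -> c <= q (w + v) - s.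
  by move=> h; apply: ge_sup => // y [u [r [h' ->]]]; apply: key.
pose B := [set z | exists u r t, A (u,r) /\ z = (u + t *: v, r + t * c)].
have AB : A `<=` B.
  by move=> [u r] h; exists u, r, 0; rewrite scale0r addr0 mul0r addr0.
exists B; split.
  split => // sub.
  have : B (v, c) by exists 0, 0, 1; rewrite scale1r add0r mul1r add0r.
  by move=> /sub /nv.
split.
- move=> a u1 r1 w1 s1 [u [r [t [h [-> ->]]]]] [w [s [t' [h' [-> ->]]]]].
  exists (a *: u + w), (a * r + s), (a * t + t'); split; first exact: lin.
  congr pair; last by ring.
  by rewrite scalerDr scalerA scalerDl addrACA.
- by apply: AB.
- move=> u1 r1 s1 [u [r [t [h e1]]]] [w [s [t' [h' e2]]]].
  case: e1 => e1 e3; case: e2 => e2 e4.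
  have [tt|tt] := eqVneq t t'.
    subst t'; move: e2; rewrite e1 => /addIr eu; subst w.
    by rewrite e3 e4 (fn _ _ _ h h').
  exfalso; apply: (nv ((t - t')^-1 * (-1 * r + s) + 0)).
  have hA := lin (t - t')^-1 _ _ _ _ (lin (-1) _ _ _ _ h h') z0.
  suff -> : v = (t - t')^-1 *: ((-1) *: u + w) + 0 by [].
  have e : (t - t') *: v = w - u.
    have e' : u + t *: v = w + t' *: v by rewrite -e1 -e2.
    have -> : w = u + t *: v - t' *: v by rewrite e' addrK.
    by rewrite scalerBl addrAC [u + _]addrC addrK.
  by rewrite addr0 scaleN1r [- u + w]addrC -e scalerA mulVf ?scale1r // subr_eq0.
- move=> u1 r1 [u [r [t [h [-> ->]]]]].
  have [t0|t0|t0] := ltgtP t 0.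
  + pose tau := - t; have tau0 : 0 < tau by rewrite /tau oppr_gt0.
    have h' : A (tau^-1 *: u + 0, tau^-1 * r + 0) by apply: lin.
    rewrite addr0 addr0 in h'; have := c1 _ _ h'.
    have -> : u + t *: v = tau *: (tau^-1 *: u - v).
      by rewrite scalerBr scalerA mulfV ?gt_eqF // scale1r /tau scaleNr opprK.
    rewrite qZ gtr0_norm // => hh.
    have : tau * (tau^-1 * r - q (tau^-1 *: u - v)) <= tau * c by rewrite ler_pM2l.
    rewrite mulrBr mulrA mulfV ?gt_eqF // mul1r /tau; lra.
  + have h' : A (t^-1 *: u + 0, t^-1 * r + 0) by apply: lin.
    rewrite addr0 addr0 in h'; have := c2 _ _ h'.
    have -> : u + t *: v = t *: (t^-1 *: u + v).
      by rewrite scalerDr scalerA mulfV ?gt_eqF // scale1r.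
    rewrite qZ gtr0_norm // => hh.
    have : t * c <= t * (q (t^-1 *: u + v) - t^-1 * r) by rewrite ler_pM2l.
    rewrite mulrBr mulrA mulfV ?gt_eqF // mul1r; lra.
  + by subst t; rewrite scale0r addr0 mul0r addr0; apply: dm.
- by apply: AB.
Qed.

Lemma real_hahn_banach : exists u : V -> R,
  [/\ forall a x y, u (a *: x + y) = a * u x + u y,
      forall x, u x <= q x & u x0 = q x0].
Proof.
have [A [PA Amax]] := Zorn_bigcup hP_chain.
pose B0 := [set z | exists t, z = (t *: x0, t * q x0)].
have vB0 : hvalid B0.
  split.
  - move=> a u r w s [t [-> ->]] [t' [-> ->]]; exists (a * t + t').
    by rewrite scalerDl scalerA mulrDl mulrA.
  - by exists 0; rewrite scale0r mul0r.
  - move=> u r s [t [-> ->]] [t' [e ->]].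
    case: e => e; have [->|nz] := eqVneq x0 0; first by rewrite q0 !mulr0.
    have : (t - t') *: x0 = 0 by rewrite scalerBl e subrr.
    by move/eqP; rewrite scaler_eq0 (negPf nz) orbF subr_eq0 => /eqP ->.
  - move=> u r [t [[-> ->]]]; rewrite qZ ler_wpM2r //; first exact: q_ge0.
    exact: ler_norm.
  - by exists 1; rewrite scale1r mul1r.
have vA : hvalid A.
  case: PA => // A0; exfalso; apply: (Amax B0); last by right.
  rewrite A0; split; first by [].
  move=> h; have := h (0, 0); case: vB0 => _ z0 _ _ _; by move/(_ z0).
have tot v : exists r, A (v, r).
  case: (pselect (exists r, A (v, r))) => // nv; exfalso.
  have nv' : forall r, ~ A (v, r) by move=> r h; apply: nv; exists r.
  have [B [AB vB]] := hvalid_extend vA nv'.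
  by apply: (Amax B AB); right.
pose u v := xget 0 (fun r => A (v, r)).
have uA v : A (v, u v) by apply: (@xgetPex _ 0 (fun r => A (v, r))).
case: vA => lin z0 fn dm bs.
exists u; split.
- by move=> a x y; apply: (fn _ _ _ (uA _)); apply: lin.
- by move=> x; apply: dm.
- exact: (fn _ _ _ (uA _) bs).
Qed.

End RealHB.
Section Complexify.
Variables (R : realType) (E : normedModType R[i]).
Local Open Scope complex_scope.

Definition RE : Type := E.
HB.instance Definition _ := GRing.Zmodule.on RE.
Definition rscale (r : R) (x : RE) : RE := (r%:C *: (x : E)).
Lemma rscaleA a b v : rscale a (rscale b v) = rscale (a * b) v.
Proof. by rewrite /rscale scalerA rmorphM. Qed.
Lemma rscale1 : left_id 1 rscale.
Proof. by move=> v; rewrite /rscale rmorph1 scale1r. Qed.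
Lemma rscaleDr : right_distributive rscale +%R.
Proof. by move=> a u v; rewrite /rscale scalerDr. Qed.
Lemma rscaleDl v : {morph rscale^~ v : a b / a + b}.
Proof. by move=> a b; rewrite /rscale rmorphD scalerDl. Qed.
HB.instance Definition _ := GRing.Zmodule_isLmodule.Build R RE
  rscaleA rscale1 rscaleDr rscaleDl.

Definition cq (x : E) : R := complex.Re `|x|.

Lemma Re_add (a b : R[i]) : complex.Re (a + b) = complex.Re a + complex.Re b.
Proof. by case: a; case: b. Qed.

Lemma Re_realM (r : R) (a : R[i]) : complex.Re (r%:C * a) = r * complex.Re a.
Proof. by case: a => x y /=; rewrite mul0r subr0. Qed.

Lemma normc_real (r : R) : `|r%:C| = `|r|%:C.
Proof. by rewrite normc_def /= expr0n /= addr0 sqrtr_sqr. Qed.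

Lemma cqD (x y : RE) : cq (x + y) <= cq x + cq y.
Proof.
have := ler_normD (x : E) y; rewrite lecE => /andP[_].
by rewrite /cq Re_add.
Qed.

Lemma cqZ (a : R) (x : RE) : cq (a *: x) = `|a| * cq x.
Proof.
by rewrite /cq [a *: x]/(rscale a x) /rscale normrZ normc_real Re_realM.
Qed.

Lemma normE (x : E) : `|x| = (cq x)%:C.
Proof.
have h : (0 : R[i]) <= `|x| by [].
have hi := ger0_Im h.
by rewrite /cq; case: (`|x|) hi => a b /= ->.
Qed.

Lemma cq_ge0 (x : E) : 0 <= cq x.
Proof.
have h : (0 : R[i]) <= `|x| by [].
by move: h; rewrite lecE => /andP[_]; rewrite /cq.
Qed.

Lemma normc_norm (x : E) : Normc.normc `|x| = cq x.
Proof.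
rewrite normE /= expr0n /= addr0 sqrtr_sqr ger0_norm //; exact: cq_ge0.
Qed.

Lemma Re_le_normc (z : R[i]) : complex.Re z <= Normc.normc z.
Proof.
case: z => a b /=; apply: (le_trans (ler_norm a)).
rewrite -sqrtr_sqr ler_sqrt ?lerDl ?sqr_ge0 //.
by rewrite addr_ge0 ?sqr_ge0.
Qed.

Lemma Re_lam (z : R[i]) : z != 0 ->
  complex.Re (z^* * ((Normc.normc z)^-1)%:C * z) = Normc.normc z.
Proof.
case: z => a b nz /=.
set s := (X in _ = X).
have ss : s ^+ 2 = a ^+ 2 + b ^+ 2 by rewrite sqr_sqrtr // addr_ge0 ?sqr_ge0.
have s0 : s != 0.
  apply/eqP => s0; move: nz; have : a +i* b = 0 by apply: Normc.eq0_normc.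
  by move=> ->; rewrite eqxx.
have -> : (a / s - - b * 0) * a - (a * 0 + - b / s) * b = (a ^+ 2 + b ^+ 2) / s.
  by field.
by rewrite -ss expr2 mulfK.
Qed.

Lemma normJ (z : R[i]) : `|z^*| = `|z|.
Proof. by case: z => a b; rewrite !normc_def /= sqrrN. Qed.

Lemma normC_def (z : R[i]) : `|z| = (Normc.normc z)%:C.
Proof. by case: z => a b; rewrite normc_def. Qed.

Lemma complex_hahn_banach (x0 : E) : exists f : E -> R[i],
  (forall (a : R[i]) (x y : E), f (a *: x + y) = a * f x + f y) /\
  (forall x, Normc.normc (f x) <= Normc.normc `|x|) /\
  Normc.normc (f x0) = Normc.normc `|x0|.
Proof.
have [u [uL ule ux0]] := @real_hahn_banach R RE cq cqD cqZ x0.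
have uL' : forall (r : R) (z w : E), u (r%:C *: z + w) = r * u z + u w.
  by move=> r z w; apply: (uL r z w).
have u0 : u 0 = 0.
  have := uL' 1 0 0; rewrite scaler0 addr0 mul1r => h.
  by apply: (addrI (u 0)); rewrite addr0 -h.
have uD z w : u (z + w) = u z + u w by have := uL' 1 z w; rewrite rmorph1 scale1r mul1r.
have uZ r z : u (r%:C *: z) = r * u z by rewrite -[_ *: z]addr0 uL' u0 addr0.
have uN z : u (- z) = - u z.
  by have := uZ (-1) z; rewrite rmorphN1 scaleN1r mulN1r.
pose f (x : E) : R[i] := (u x) +i* (- u ('i *: x)).
exists f; split.
  move=> [al be] x y.
  have e1 : (al +i* be) *: x = al%:C *: x + be%:C *: ('i *: x).
    by rewrite scalerA -scalerDl; congr (_ *: _); apply/eqP; rewrite eq_complex /=; simpc.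
  have e2 : 'i *: ((al +i* be) *: x) = al%:C *: ('i *: x) + (- be)%:C *: x.
    rewrite !scalerA -scalerDl; congr (_ *: _); apply/eqP; rewrite eq_complex /=; simpc.
    by rewrite ?mulr0 ?subr0 ?addr0 ?mulr1.
  rewrite /f scalerDr !uD e2 e1 !uD !uZ.
  apply/eqP; rewrite eq_complex /=; apply/andP; split; apply/eqP; ring.
have fRe x : complex.Re (f x) = u x by [].
have fZ (lam : R[i]) x : f (lam *: x) = lam * f x.
  case: lam => al be.
  have e1 : (al +i* be) *: x = al%:C *: x + be%:C *: ('i *: x).
    by rewrite scalerA -scalerDl; congr (_ *: _); apply/eqP; rewrite eq_complex /=; simpc.
  have e2 : 'i *: ((al +i* be) *: x) = al%:C *: ('i *: x) + (- be)%:C *: x.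
    rewrite !scalerA -scalerDl; congr (_ *: _); apply/eqP; rewrite eq_complex /=; simpc.
    by rewrite ?mulr0 ?subr0 ?addr0 ?mulr1.
  rewrite /f e2 e1 !uD !uZ.
  apply/eqP; rewrite eq_complex /=; apply/andP; split; apply/eqP; ring.
have fb x : Normc.normc (f x) <= cq x.
  have [z0|nz] := eqVneq (f x) 0.
    by rewrite z0 Normc.normc0; apply: cq_ge0.
  set z := f x in nz *.
  set n := Normc.normc z.
  have n0 : 0 < n.
    rewrite lt_neqAle eq_sym; apply/andP; split.
      by apply/eqP => /Normc.eq0_normc; apply/eqP.
    by rewrite /n /Normc.normc; case: (z) => ? ?; rewrite sqrtr_ge0.
  pose lam := z^* * (n^-1)%:C.
  have hlz : complex.Re (lam * z) = n.
    exact: Re_lam.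
  have hlam : `|lam| = 1.
    rewrite /lam normrM normc_real (@ger0_norm _ n^-1); last by rewrite invr_ge0 ltW.
    rewrite normJ normC_def.
    by rewrite -rmorphM mulfV ?gt_eqF.
  have := ule (lam *: x).
  rewrite -fRe fZ hlz; move=> h; apply: (le_trans h).
  by rewrite /cq [lam *: x]/(lam *: (x : E)) normrZ hlam mul1r.
split.
  by move=> x; rewrite normc_norm; apply: fb.
apply/le_anti/andP; split; first by rewrite normc_norm; apply: fb.
by rewrite normc_norm -ux0 -fRe; apply: Re_le_normc.
Qed.

End Complexify.
Section Gen.
Variables (R : realType) (K : numFieldType) (nr : K -> R).
Hypothesis nrM : forall a b, nr (a * b) = nr a * nr b.
Hypothesis nr0 : nr 0 = 0.
Hypothesis nr1 : nr 1 = 1.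
Hypothesis nr_ge0 : forall a, 0 <= nr a.
Hypothesis nr_surj : forall t : R, 0 <= t -> exists c : K, nr c = t.
Hypothesis nr_norm : forall a : K, nr `|a| = nr a.
Variable (p : R).
Hypothesis hp : 1 <= p.

Let p0 : 0 < p. Proof. exact: lt_le_trans hp. Qed.
Let pn0 : p != 0. Proof. by rewrite gt_eqF. Qed.

Local Open Scope ereal_scope.

Lemma powRK (r : R) : (0 <= r)%R -> ((r `^ p) `^ p^-1)%R = r.
Proof. by move=> r0; rewrite -powRrM mulfV // powRr1. Qed.

Lemma powRK' (r : R) : (0 <= r)%R -> ((r `^ p^-1) `^ p)%R = r.
Proof. by move=> r0; rewrite -powRrM mulVf // powRr1. Qed.

Lemma powinv_le (e : \bar R) (s : R) : 0 <= e -> (0 <= s)%R ->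
  (e `^ p^-1 <= s%:E) = (e <= (s `^ p)%:E).
Proof.
case: e => [r| |] r0 s0; last by [].
  2: by rewrite /= invr_eq0 (negPf pn0) !leye_eq.
rewrite poweR_EFin !lee_fin; apply/idP/idP => h.
  rewrite -[X in (X <= _)%R](powRK' r0); apply: ge0_ler_powR => //; last by rewrite nnegrE powR_ge0.
  exact: ltW.
rewrite -(powRK s0); apply: ge0_ler_powR => //; first by rewrite invr_ge0 ltW.
by rewrite nnegrE powR_ge0.
Qed.

Lemma powinv_lty (e : \bar R) : (e `^ p^-1 < +oo) = (e < +oo).
Proof.
apply/idP/idP; first by apply: lty_poweRy; rewrite invr_eq0.
exact: poweR_lty.
Qed.

Lemma powe_le (e1 e2 : \bar R) : 0 <= e1 -> e1 <= e2 -> e1 `^ p^-1 <= e2 `^ p^-1.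
Proof.
move=> h1 h2; apply: gt0_ler_poweR => //; first by rewrite invr_ge0 ltW.
  by rewrite in_itv /= h1 leey.
by rewrite in_itv /= (le_trans h1 h2) leey.
Qed.

Lemma fin_bound (e : \bar R) : e < +oo -> exists W : R, (0 <= W)%R /\ e <= W%:E.
Proof.
case: e => // [r|] _; last by exists 0%R; split => //; rewrite leNye.
by exists (Num.max 0 r)%R; split; [rewrite le_max lexx | rewrite lee_fin le_max lexx orbT].
Qed.

Lemma term_le_series (u : nat -> \bar R) j : (forall i, 0 <= u i) ->
  u j <= \sum_(i <oo) u i.
Proof.
move=> u0; apply: le_trans (nneseries_lim_ge j.+1 (fun i _ _ => u0 i)).
rewrite big_nat_recr //= leeDr //; exact: sume_ge0.
Qed.

Lemma series_fin (u : nat -> \bar R) N : (forall j, (N <= j)%N -> u j = 0) ->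
  \sum_(j <oo) u j = \sum_(j < N) u j.
Proof.
move=> u0.
apply: lim_near_cst => //; near=> n. have Nn : (N <= n)%N by near: n; exists N.
rewrite (big_cat_nat (n := N)) //= [X in _ + X]big1_seq ?adde0 ?big_mkord //.
by move=> i /andP[_]; rewrite mem_index_iota => /andP[h _]; apply: u0.
Unshelve. all: by end_near. Qed.

Lemma pow0 : (0 `^ p)%R = 0%R.
Proof. by rewrite powR0. Qed.

Lemma one_powR : ((1:R) `^ p)%R = 1%R.
Proof. by rewrite powR1. Qed.

Lemma series_single (u : nat -> \bar R) j : (forall i, i != j -> u i = 0) ->
  \sum_(i <oo) u i = u j.
Proof.
move=> u0; rewrite (series_fin (N := j.+1)); last first.
  by move=> i hi; apply: u0; rewrite neq_ltn ltnNge hi orbT.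
rewrite big_ord_recr /= big1 ?add0e // => i _; apply: u0.
by rewrite neq_ltn ltn_ord.
Qed.

Lemma mul_fin (x : R) (e : \bar R) : (0 < x)%R -> (x%:E * e < +oo)%E -> (e < +oo)%E.
Proof.
move=> x0; case: e => [r _|h|//]; first by rewrite ltry.
by move: h; rewrite mulry gtr0_sg // mul1e.
Qed.

Section OverE.
Variable E : normedModType K.
Local Open Scope ring_scope.

Lemma lin0 (f : E -> K) : is_lin f -> f 0 = 0.
Proof.
move=> fl; have := fl 1 0 0; rewrite scaler0 addr0 mul1r => h.
by apply: (addrI (f 0)); rewrite addr0 -h.
Qed.

Lemma linZ (f : E -> K) a x : is_lin f -> f (a *: x) = (a * f x)%R.
Proof. by move=> fl; rewrite -[a *: x]addr0 fl (lin0 fl) addr0. Qed.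

Lemma dual_space_ball (f : E -> K) : dual_ball nr f -> dual_space nr f.
Proof. by move=> [fl fb]; split => //; exists 1%R => x; rewrite mul1r. Qed.

Lemma dual_norm_le1 (f : E -> K) : dual_ball nr f -> (dual_norm nr f <= 1)%E.
Proof.
move=> [fl fb]; apply: ge_ereal_sup => _ [x /= x1 <-].
by rewrite lee_fin (le_trans (fb x)).
Qed.

Lemma zero_dual : dual_space nr (fun _ : E => 0%R).
Proof.
split; first by move=> a x y; rewrite mulr0 addr0.
by exists 0%R => x; rewrite nr0 mul0r.
Qed.

Lemma bidual0 (phi : (E -> K) -> K) : bidual_ball nr phi -> phi (fun _ => 0%R) = 0%R.
Proof.
move=> [pl _]; have := pl 1%R _ _ zero_dual zero_dual.
have -> : (fun x : E => 1 * (0:K) + 0)%R = (fun _ => 0%R) by apply: boolp.funext => x; rewrite mulr0 addr0.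
rewrite mul1r => h; by apply: (addrI (phi (fun _ => 0%R))); rewrite addr0 -h.
Qed.

Lemma bidual_scale (phi : (E -> K) -> K) (c : K) (f : E -> K) :
  bidual_ball nr phi -> dual_space nr f ->
  phi (fun x => c * f x)%R = (c * phi f)%R.
Proof.
move=> hphi fd; have := (proj1 hphi) c _ _ fd zero_dual.
have -> : (fun x : E => c * f x + 0)%R = (fun x => c * f x)%R by apply: boolp.funext => x; rewrite addr0.
by rewrite bidual0 // addr0.
Qed.

Lemma dual_scale (c : K) (f : E -> K) : dual_space nr f -> dual_space nr (fun x => c * f x)%R.
Proof.
move=> [fl [C fC]]; split.
  by move=> a x y; rewrite fl mulrDr mulrCA.
exists (nr c * C)%R => x; rewrite nrM -mulrA ler_wpM2l //.
Qed.

Lemma eval_bidual (x : E) : (nr `|x| <= 1)%R -> bidual_ball nr (fun f => f x).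
Proof.
move=> x1; split => // f _.
by apply: ereal_sup_ubound; exists x.
Qed.

Lemma dual_zero (f : E -> K) : dual_space nr f -> nr (f 0) = 0%R.
Proof. by move=> [fl _]; rewrite lin0. Qed.


Lemma psum_ge0 (u : nat -> R) : (0 <= psum p u)%E.
Proof. by apply: nneseries_ge0 => n _ _; rewrite lee_fin powR_ge0. Qed.

Lemma wnd_ge (fs : nat -> E -> K) x : (forall n, dual_space nr (fs n)) ->
  nr `|x| <= 1 ->
  ((psum p (fun n => nr (fs n x))) `^ p^-1 <= weak_norm_dual nr p fs)%E.
Proof.
by move=> hd x1; apply: ereal_sup_ubound; exists (fun f => f x) => //; exact: eval_bidual.
Qed.

Lemma wnd_bound (fs : nat -> E -> K) (W : R) x : (forall n, dual_space nr (fs n)) ->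
  0 <= W -> (weak_norm_dual nr p fs <= W%:E)%E ->
  (psum p (fun n => nr (fs n x)) <= ((W * nr `|x|) `^ p)%:E)%E.
Proof.
move=> hd W0 hW.
have [->|nx] := eqVneq x 0.
  rewrite /psum eseries0; first by rewrite lee_fin powR_ge0.
  by move=> i _ _; rewrite dual_zero // pow0.
pose y := `|x|^-1 *: x.
have ny : nr `|y| = 1 by rewrite /y normrZ normfV normr_id mulVf ?normr_eq0.
have xe : x = `|x| *: y by rewrite /y scalerA mulfV ?normr_eq0 // scale1r.
have e n : nr (fs n x) = nr `|x| * nr (fs n y).
  by rewrite {1}xe linZ ?nrM //; case: (hd n).
have -> : psum p (fun n => nr (fs n x)) = ((nr `|x| `^ p)%:E * psum p (fun n => nr (fs n y)))%E.
  rewrite /psum -nneseriesZl; last by move=> i _; rewrite lee_fin powR_ge0.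
  by apply: eq_eseriesr => n _; rewrite e powRM // EFinM.
have hy : (psum p (fun n => nr (fs n y)) <= (W `^ p)%:E)%E.
  rewrite -(powinv_le (psum_ge0 _) W0).
  by apply: le_trans hW; apply: wnd_ge => //; rewrite ny.
rewrite mulrC powRM // EFinM; apply: lee_wpmul2l => //.
by rewrite lee_fin powR_ge0.
Qed.

Definition single (f : E -> K) : nat -> E -> K :=
  fun n => if n == 0%N then f else (fun _ => 0).

Lemma single_adm (f : E -> K) : dual_ball nr f ->
  (forall n, dual_space nr (single f n)) /\ (weak_norm_dual nr p (single f) <= 1)%E.
Proof.
move=> hf; have hd n : dual_space nr (single f n).
  by rewrite /single; case: ifP => _; [exact: dual_space_ball|exact: zero_dual].
split => //; apply: ge_ereal_sup => _ [phi hphi <-].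
have -> : (1%E : \bar R) = (1%R)%:E by [].
rewrite (powinv_le (psum_ge0 _) ler01).
rewrite /psum (series_fin (N := 1)); last first.
  by move=> j j1; rewrite /single; case: eqP j1 => [->//|_ _]; rewrite bidual0 // nr0 pow0.
rewrite big_ord1 lee_fin.
have -> : single f ord0 = f by [].
have h1 : nr (phi f) <= 1.
  have := (proj2 hphi) f (dual_space_ball hf).
  move=> h; rewrite -lee_fin; apply: le_trans h _; exact: dual_norm_le1.
have := @ge0_ler_powR R p (ltW p0) (nr (phi f)) 1.
by rewrite !nnegrE => /(_ (nr_ge0 _) ler01 h1).
Qed.

Lemma mid_sum_single (f : E -> K) xs :
  (psum p (fun j => nr (f (xs j))) <= mid_sum nr p (single f) xs)%E.
Proof.
rewrite /mid_sum.
apply: (term_le_series (u := fun n => psum p (fun j => nr (single f n (xs j)))) 0) => i.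
exact: psum_ge0.
Qed.

Lemma norm_le_mid (xs : nat -> E) j (f : E -> K) : dual_ball nr f ->
  nr (f (xs j)) = nr `|xs j| -> ((nr `|xs j|)%:E <= mid_norm nr p xs)%E.
Proof.
move=> hf fe.
apply: (@le_trans _ _ ((mid_sum nr p (single f) xs) `^ p^-1)%E); last first.
  by apply: ereal_sup_ubound; exists (single f) => //; exact: single_adm.
rewrite -[X in (X%:E <= _)%E](powRK (nr_ge0 _)) -poweR_EFin.
apply: powe_le; first by rewrite lee_fin powR_ge0.
apply: le_trans (mid_sum_single _ _).
rewrite -fe; apply: (term_le_series (u := fun j => ((nr (f (xs j))) `^ p)%:E)) => i.
by rewrite lee_fin powR_ge0.
Qed.

Lemma mid_sum_ge0 fs (xs : nat -> E) : (0 <= mid_sum nr p fs xs)%E.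
Proof. by apply: nneseries_ge0 => n _ _; exact: psum_ge0. Qed.

Lemma mid_sum_trunc_le fs (xs : nat -> E) k : (forall n, dual_space nr (fs n)) ->
  (mid_sum nr p fs (trunc k xs) <= mid_sum nr p fs xs)%E.
Proof.
move=> hd; rewrite /mid_sum; apply: lee_nneseries => [n _ _|n _]; first exact: psum_ge0.
rewrite /psum; apply: lee_nneseries => [j _ _|j _]; first by rewrite lee_fin powR_ge0.
rewrite /trunc; case: ifP => _ //; rewrite dual_zero // pow0 lee_fin powR_ge0 //.
Qed.

Lemma mid_norm_trunc_le (xs : nat -> E) k :
  (mid_norm nr p (trunc k xs) <= mid_norm nr p xs)%E.
Proof.
apply: ge_ereal_sup => _ [fs [hd hw] <-].
apply: le_trans (powe_le (mid_sum_ge0 _ _) (mid_sum_trunc_le _ _ hd)) _.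
by apply: ereal_sup_ubound; exists fs.
Qed.

Lemma mid_sum_sup fs (xs : nat -> E) : (forall n, dual_space nr (fs n)) ->
  mid_sum nr p fs xs = ereal_sup (range (fun k => mid_sum nr p fs (trunc k xs))).
Proof.
move=> hd.
pose a n j := (((nr (fs n (xs j))) `^ p)%:E : \bar R).
have a0 n j : (0 <= a n j)%E by rewrite lee_fin powR_ge0.
have tk k : mid_sum nr p fs (trunc k xs) = (\sum_(0 <= j < k) \sum_(n <oo) a n j)%E.
  rewrite /mid_sum.
  transitivity (\sum_(n <oo) \sum_(0 <= j < k) a n j)%E.
    apply: eq_eseriesr => n _; rewrite /psum (series_fin (N := k)).
      by rewrite [RHS]big_mkord; apply: eq_bigr => j _; rewrite /trunc ltn_ord.
    move=> j kj; have -> : trunc k xs j = 0 by rewrite /trunc ltnNge kj.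
    by rewrite dual_zero // pow0.
  exact: (@nneseries_sum_nat R 0 k (fun i n => a n i) 0 (fun i n => a0 n i)).
have -> : mid_sum nr p fs xs = (\sum_(j <oo) \sum_(n <oo) a n j)%E.
  by rewrite /mid_sum /psum; exact: (@nneseries_interchange R a xpredT xpredT a0).
have nd : nondecreasing_seq (fun k => (\sum_(0 <= j < k) \sum_(n <oo) a n j)%E).
  by apply: ereal_nondecreasing_series => j _ _; apply: nneseries_ge0 => n _ _.
rewrite (cvg_lim _ (ereal_nondecreasing_cvgn nd)) //.
have -> : (fun k => mid_sum nr p fs (trunc k xs)) =
    (fun k => (\sum_(0 <= j < k) \sum_(n <oo) a n j)%E) by apply/funext => k; rewrite tk.
by [].
Qed.

Lemma mid_norm_sup (xs : nat -> E) :
  mid_norm nr p xs = ereal_sup (range (fun k => mid_norm nr p (trunc k xs))).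
Proof.
apply/le_anti/andP; split; last first.
  by apply: ge_ereal_sup => _ [k _ <-]; exact: mid_norm_trunc_le.
apply: ge_ereal_sup => _ [fs [hd hw] <-].
have hS k : ((mid_sum nr p fs (trunc k xs)) `^ p^-1 <=
    ereal_sup (range (fun k => mid_norm nr p (trunc k xs))))%E.
  apply: (@le_trans _ _ (mid_norm nr p (trunc k xs))).
    by apply: ereal_sup_ubound; exists fs.
  by apply: ereal_sup_ubound; exists k.
case Sv : (ereal_sup (range (fun k => mid_norm nr p (trunc k xs)))) hS => [s| |] hS; last 2 first.
- by rewrite leey.
- exfalso; have h2 := le_trans (poweR_ge0 _ _) (hS 0%N).
  by move: h2; rewrite leeNy_eq.
have s0 : 0 <= s.
  by rewrite -lee_fin; apply: le_trans (hS 0%N); apply: poweR_ge0.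
rewrite (powinv_le (mid_sum_ge0 _ _) s0).
rewrite mid_sum_sup //; apply: ge_ereal_sup => _ [k _ <-].
by rewrite -(powinv_le (mid_sum_ge0 _ _) s0); exact: hS.
Qed.

Lemma c00_mid (xs : nat -> E) : c00 xs -> mid_seq nr p xs.
Proof.
move=> [N hN]; split.
  pose S := (\sum_(j < N) (nr `|xs j|) `^ p)%R.
  apply: (@le_lt_trans _ _ ((S%:E) `^ p^-1)%E); last by apply: poweR_lty; rewrite ltry.
  apply: ge_ereal_sup => _ [f [fl fb] <-].
  apply: powe_le; first exact: psum_ge0.
  rewrite /psum (series_fin (N := N)); last first.
    by move=> j hj; rewrite hN // lin0 // nr0 pow0.
  rewrite sumEFin lee_fin; apply: ler_sum => j _.
  have := @ge0_ler_powR R p (ltW p0) (nr (f (xs j))) (nr `|xs j|).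
  by rewrite !nnegrE; apply.
move=> fs [hd hw].
have [W [W0 hW]] := fin_bound hw.
pose a n j := (((nr (fs n (xs j))) `^ p)%:E : \bar R).
have a0 n j : (0 <= a n j)%E by rewrite lee_fin powR_ge0.
have -> : mid_sum nr p fs xs = (\sum_(n <oo) \sum_(0 <= j < N) a n j)%E.
  rewrite /mid_sum; apply: eq_eseriesr => n _; rewrite /psum (series_fin (N := N)).
    by rewrite [RHS]big_mkord.
  by move=> j hj; rewrite hN // dual_zero // pow0.
rewrite (@nneseries_sum_nat R 0 N (fun i n => a n i) 0 (fun i n => a0 n i)).
apply: (@le_lt_trans _ _ (\sum_(0 <= j < N) (((W * nr `|xs j|) `^ p)%:E))%E).
  by apply: lee_sum => j _; apply: wnd_bound.
by rewrite sumEFin ltry.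
Qed.

Lemma mid_seq_of_fin (xs : nat -> E) : (mid_norm nr p xs < +oo)%E -> mid_seq nr p xs.
Proof.
move=> hfin; split.
  apply: le_lt_trans hfin; apply: ge_ereal_sup => _ [f hf <-].
  apply: le_trans (powe_le (psum_ge0 _) (mid_sum_single f xs)) _.
  by apply: ereal_sup_ubound; exists (single f) => //; exact: single_adm.
move=> fs [hd hw].
have [W [W0 hW]] := fin_bound hw.
have W1 : 0 < W + 1 by rewrite ltr_wpDl.
have Wi : 0 <= (W + 1)^-1 by rewrite invr_ge0 ltW.
have [c hc] := nr_surj Wi.
pose gs n := fun x => (c * fs n x)%R.
have hgd n : dual_space nr (gs n) by apply: dual_scale.
have c0 : 0 < nr c by rewrite hc invr_gt0.
have hgw : (weak_norm_dual nr p gs <= 1)%E.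
  apply: ge_ereal_sup => _ [phi hphi <-].
  have -> : (1%E : \bar R) = (1%R)%:E by [].
  rewrite (powinv_le (psum_ge0 _) ler01) one_powR.
  have -> : psum p (fun n => nr (phi (gs n))) =
      ((nr c `^ p)%:E * psum p (fun n => nr (phi (fs n))))%E.
    rewrite /psum -nneseriesZl; last by move=> i _; rewrite lee_fin powR_ge0.
    by apply: eq_eseriesr => n _; rewrite /gs bidual_scale // nrM powRM // EFinM.
  have hb : (psum p (fun n => nr (phi (fs n))) <= (W `^ p)%:E)%E.
    rewrite -(powinv_le (psum_ge0 _) W0); apply: le_trans hW.
    by apply: ereal_sup_ubound; exists phi.
  apply: le_trans (lee_wpmul2l _ hb) _; first by rewrite lee_fin powR_ge0.
  rewrite -EFinM -powRM // lee_fin -one_powR.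
  have := @ge0_ler_powR R p (ltW p0) (nr c * W) 1.
  rewrite !nnegrE; apply => //; first by rewrite mulr_ge0.
  by rewrite hc mulrC ler_pdivrMr // mul1r lerDl.
have hm : ((mid_sum nr p gs xs) `^ p^-1 <= mid_norm nr p xs)%E.
  by apply: ereal_sup_ubound; exists gs.
have hgs : (mid_sum nr p gs xs < +oo)%E by rewrite -powinv_lty; apply: le_lt_trans hm hfin.
have e : mid_sum nr p gs xs = ((nr c `^ p)%:E * mid_sum nr p fs xs)%E.
  rewrite /mid_sum -nneseriesZl; last by move=> i _; exact: psum_ge0.
  apply: eq_eseriesr => n _; rewrite /psum -nneseriesZl; last by move=> i _; rewrite lee_fin powR_ge0.
  by apply: eq_eseriesr => j _; rewrite /gs nrM powRM // EFinM.
rewrite e in hgs.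
by apply: mul_fin hgs; apply: powR_gt0.
Qed.

Lemma reindex2 (g : nat -> nat * nat) (b : nat -> nat -> \bar R) :
  set_bij setT setT g -> (forall m k, (0 <= b m k)%E) ->
  (\sum_(n <oo) b (g n).1 (g n).2 = \sum_(m <oo) \sum_(k <oo) b m k)%E.
Proof.
move=> gb b0.
rewrite nneseries_esumT //.
rewrite -(reindex_esum setT setT g (fun z => b z.1 z.2)) //.
have -> : [set: nat * nat] = [set: nat] `*`` (fun=> [set: nat]).
  by apply/seteqP; split => // z.
rewrite -(@esum_esum R _ _ setT (fun=> setT) b) //.
rewrite nneseries_esumT; last by move=> m; apply: nneseries_ge0 => k _ _.
by apply: eq_esum => m _; rewrite nneseries_esumT.
Qed.

Lemma mid_fin_of_seq (xs : nat -> E) : mid_seq nr p xs -> (mid_norm nr p xs < +oo)%E.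
Proof.
move=> [hwk hm]; rewrite ltey; apply/negP => /eqP Hinf.
pose d (m : nat) : R := (1 / (2 ^ (m + 1))%:R)%R.
have d0 m : 0 < d m by rewrite /d divr_gt0 // ltr0n expn_gt0.
have big m : exists fs : nat -> E -> K,
    ((forall n, dual_space nr (fs n)) /\ (weak_norm_dual nr p fs <= 1)%E) /\
    (((d m)^-1)%:E < mid_sum nr p fs xs)%E.
  have : ((((d m)^-1) `^ p^-1)%:E < mid_norm nr p xs)%E by rewrite Hinf ltry.
  move/ereal_sup_gt => [_ [fs hfs <-] hlt]; exists fs; split => //.
  rewrite ltNge; apply/negP => hle; move: hlt; apply/negP; rewrite -leNgt.
  have hd : 0 <= ((d m)^-1 `^ p^-1) by apply: powR_ge0.
  by rewrite (powinv_le (mid_sum_ge0 _ _) hd) powRK' // invr_ge0 ltW.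
have [F hF] := choice big.
have [c hc] : exists c : nat -> K, forall m, nr (c m) = (d m `^ p^-1)%R.
  have h m : exists c0 : K, nr c0 = (d m `^ p^-1)%R by apply: nr_surj; apply: powR_ge0.
  by have [c hc] := choice h; exists c.
have hcp m : ((nr (c m)) `^ p)%R = d m by rewrite hc powRK' // ltW.
have [g gb] : exists g : nat -> nat * nat, set_bij setT setT g.
  by apply/card_set_bijP; apply: card_esym; exact: card_nat2.
pose G n := fun x => (c (g n).1 * F (g n).1 (g n).2 x)%R.
have hFd m n : dual_space nr (F m n) by have [[h _] _] := hF m.
have hGd n : dual_space nr (G n) by apply: dual_scale.
have geo : (\sum_(m <oo) (d m)%:E = 1)%E.
  apply/cvg_lim => //.
  have := @cvg_geometric_eseries_half R 1 0.
  by rewrite expr0 divr1.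
have hGw : (weak_norm_dual nr p G <= 1)%E.
  apply: ge_ereal_sup => _ [phi hphi <-].
  have -> : (1%E : \bar R) = (1%R)%:E by [].
  rewrite (powinv_le (psum_ge0 _) ler01) one_powR.
  pose b m k := (((nr (c m) * nr (phi (F m k))) `^ p)%:E : \bar R).
  have b0 m k : (0 <= b m k)%E by rewrite lee_fin powR_ge0.
  have -> : psum p (fun n => nr (phi (G n))) = (\sum_(n <oo) b (g n).1 (g n).2)%E.
    by apply: eq_eseriesr => n _; rewrite /G bidual_scale // nrM.
  rewrite reindex2 //.
  rewrite -geo; apply: lee_nneseries => [m _ _|m _]; first by apply: nneseries_ge0 => k _ _.
  have -> : (\sum_(k <oo) b m k = (d m)%:E * psum p (fun k => nr (phi (F m k))))%E.
    rewrite /psum -nneseriesZl; last by move=> i _; rewrite lee_fin powR_ge0.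
    by apply: eq_eseriesr => k _; rewrite /b powRM // EFinM hcp.
  rewrite -[X in (_ <= X)%E]mule1; apply: lee_wpmul2l; first by rewrite lee_fin ltW.
  have [[_ hw1] _] := hF m.
  rewrite -one_powR -(powinv_le (psum_ge0 _) ler01); apply: le_trans hw1.
  by apply: ereal_sup_ubound; exists phi.
have := hm G (conj hGd (le_lt_trans hGw (ltry 1%R))).
pose b m k := (psum p (fun j => nr (c m * F m k (xs j)))).
have b0 m k : (0 <= b m k)%E by apply: psum_ge0.
have -> : mid_sum nr p G xs = (\sum_(n <oo) b (g n).1 (g n).2)%E by [].
rewrite reindex2 //.
have hb m : (\sum_(k <oo) b m k = (d m)%:E * mid_sum nr p (F m) xs)%E.
  rewrite /mid_sum -nneseriesZl; last by move=> i _; exact: psum_ge0.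
  apply: eq_eseriesr => k _; rewrite /b /psum -nneseriesZl; last by move=> i _; rewrite lee_fin powR_ge0.
  by apply: eq_eseriesr => j _; rewrite nrM powRM // EFinM hcp.
have h1 m : (1 <= \sum_(k <oo) b m k)%E.
  rewrite hb; have [_ hlt] := hF m.
  apply: (@le_trans _ _ ((d m)%:E * ((d m)^-1)%:E)%E).
    by rewrite -EFinM mulfV ?gt_eqF.
  by apply: lee_wpmul2l; [rewrite lee_fin ltW | exact: ltW].
move=> hfin.
have hB m : (0 <= \sum_(k <oo) b m k)%E by apply: nneseries_ge0 => k _ _; exact: b0.
have hge : (0 <= \sum_(m <oo) \sum_(k <oo) b m k)%E.
  by apply: nneseries_ge0 => m _ _; exact: hB.
have [r hr] : exists r : R, (\sum_(m <oo) \sum_(k <oo) b m k)%E = r%:E.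
  move: hfin hge; case: (\sum_(m <oo) \sum_(k <oo) b m k)%E => [r _ _|//|_].
    by exists r.
  by rewrite leeNy_eq.
have hn n : ((n%:R)%:E <= r%:E)%E.
  rewrite -hr; apply: le_trans (nneseries_lim_ge n (fun m _ _ => hB m)).
  elim: n => [|n ih]; first by rewrite big_geq.
  rewrite big_nat_recr //= -natr1 EFinD; apply: leeD => //; exact: h1.
have r0 : 0 <= r by rewrite -lee_fin; apply: le_trans (hn 0%N).
have := hn (Num.bound r); rewrite lee_fin leNgt => /negP; apply.
exact: archi_boundP.
Qed.

End OverE.

Lemma unit_norm j : mid_norm (E := K) nr p (unit_seq K j) = 1%E.
Proof.
have e1 : (1%E : \bar R) = (1%R)%:E by [].
apply/le_anti/andP; split.
  apply: ge_ereal_sup => _ [fs [hd hw] <-].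
  rewrite (powinv_le (mid_sum_ge0 _ _) ler01) one_powR.
  have -> : mid_sum nr p fs (unit_seq K j) = psum p (fun n => nr (fs n 1%R)).
    apply: eq_eseriesr => n _; rewrite /psum (series_single (j := j)).
      by rewrite /unit_seq eqxx.
    by move=> i ij; rewrite /unit_seq (negPf ij) dual_zero // pow0.
  have := @wnd_bound K fs 1%R 1%R hd ler01 hw.
  by rewrite normr1 nr1 mulr1 one_powR.
have hid : dual_ball nr (fun x : K => x).
  by split => [a x y|x]; [rewrite /= | rewrite nr_norm].
apply: (@le_trans _ _ ((mid_sum nr p (single (fun x : K => x)) (unit_seq K j)) `^ p^-1)%E); last first.
  by apply: ereal_sup_ubound; exists (single (fun x : K => x)) => //; exact: single_adm.
apply: le_trans (powe_le (psum_ge0 _) (mid_sum_single _ _)).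
rewrite /psum (series_single (j := j)); last first.
  by move=> i ij; rewrite /unit_seq (negPf ij) nr0 pow0.
by rewrite /unit_seq eqxx nr1 one_powR poweR_EFin powR1.
Qed.

Theorem mid_fd_generic :
  (forall (E : normedModType K) (x : E), exists f, dual_ball nr f /\ nr (f x) = nr `|x|) ->
  mid_finitely_determined nr p.
Proof.
move=> HB; split; last exact: unit_norm.
move=> E; split; first exact: c00_mid.
split.
  move=> xs _ j; have [f [hf fe]] := HB E (xs j); exact: norm_le_mid hf fe.
split.
  move=> xs; rewrite -mid_norm_sup; split; [exact: mid_fin_of_seq | exact: mid_seq_of_fin].
by move=> xs _; exact: mid_norm_sup.
Qed.

End Gen.

Lemma HB_real (R : realType) (E : normedModType R) (x : E) :
  exists f : E -> R, dual_ball (@Num.norm R R) f /\ `|f x| = `| `|x| |.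
Proof.
have [u [ul ub ux]] := @real_hahn_banach R E (@Num.norm _ E) (@ler_normD _ E)
  (fun a y => normrZ a y) x.
have u0 : u 0 = 0.
  have := ul 1 0 0; rewrite scaler0 addr0 mul1r => h.
  by apply: (addrI (u 0)); rewrite addr0 -h.
have uN y : u (- y) = - u y.
  by have := ul (-1) y 0; rewrite addr0 u0 addr0 scaleN1r mulN1r.
exists u; split; last by rewrite ux normr_id.
split; first by move=> a y z; exact: ul.
move=> y; rewrite normr_id ler_norml ub andbT.
by have := ub (- y); rewrite uN normrN lerNl.
Qed.

Lemma HB_cplx (R : realType) (E : normedModType R[i]) (x : E) :
  exists f : E -> R[i], dual_ball (@Normc.normc R) f /\
    Normc.normc (f x) = Normc.normc `|x|.
Proof.
have [f [fl [fb fx]]] := complex_hahn_banach x.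
by exists f; split => //; split.
Qed.

Lemma normc_ge0 (R : realType) (a : R[i]) : 0 <= Normc.normc a.
Proof. by case: a => ? ?; rewrite /= sqrtr_ge0. Qed.

Lemma normc_realC (R : realType) (t : R) : Normc.normc (t%:C)%C = `|t|.
Proof. by rewrite /= expr0n /= addr0 sqrtr_sqr. Qed.

Theorem proposition1p9 (R : realType) (p : R) (hp : 1 <= p) :
  mid_finitely_determined (K := R) (@Num.norm R R) p /\
  mid_finitely_determined (K := R[i]) (@Normc.normc R) p.
Proof.
split.
  apply: mid_fd_generic => //.
  - exact: normrM.
  - exact: normr0.
  - exact: normr1.
  - move=> t t0; exists t; exact: ger0_norm.
  - move=> a; exact: normr_id.
  - move=> E x; have [f [hf fe]] := HB_real x; exists f; split => //.
apply: mid_fd_generic => //.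
- exact: Normc.normcM.
- exact: Normc.normc0.
- exact: Normc.normc1.
- exact: normc_ge0.
- by move=> t t0; exists (t%:C)%C; rewrite normc_realC ger0_norm.
- by move=> a; rewrite normC_def normc_realC ger0_norm // normc_ge0.
- move=> E x; exact: HB_cplx.
Qed.
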